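(* In the single-node mining process with $\phi(s)=s^a$, the expected total number of hash attempts needed for the node to build a block-chain of length $L\ge1$ is at most $$\frac{D_s}{R^a}\sum_{n=0}^{L-1}\frac{1}{(n+1)^a}.$$
   Context: Fix real parameters $M>0$ (scale of the system), $R>0$ (the stake reward StakRwd), $0<D_c\le D_s$ (coin-issue difficulty constant CoinD and stake-issue difficulty constant StakD), and $0<a<1$. Put $p=D_c/D_s$, $q=1-p$. Single-node mining process with threshold function $\phi$: a node, who makes no stake transactions with anybody, starts with stake $S_0=0$. For $n=0,1,2,\dots$ the $(n+1)$-th block is produced as follows: the node makes successive hash attempts, each producing a hash value uniformly distributed on $[0,M]$, independent of all previous randomness; the block is created at the first attempt whose hash $h$ satisfies $h\le M\phi(R+S_n)/D_c$ (the coin-issue threshold), and then $S_{n+1}=S_n+R$ if moreover $h\le M\phi(R+S_n)/D_s$ (the stake-issue threshold), otherwise $S_{n+1}=S_n$. Assume $0<\phi(R+S)\le D_c$ for all $S\in\{0,R,2R,\dots,(L-1)R\}$. Time is measured as the total number of hash attempts. In this statement $\phi(s)=s^a$ (radical stake system with equal exponent $a$). *)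

(* Defs.v *)
From Stdlib Require Import Reals List.
Import ListNotations.
Open Scope R_scope.

(** Outcome of a single hash attempt h (uniform on [0,M]):
    - [StakeIss] : h <= M phi(R+S)/Ds  (block created and stake issued)
    - [CoinOnly] : M phi(R+S)/Ds < h <= M phi(R+S)/Dc (block created, no stake)
    - [Fail]     : h > M phi(R+S)/Dc  (no block) *)
Inductive outcome := Fail | CoinOnly | StakeIss.

(** Probability that a hash uniform on [0,M] falls in each region, given
    current stake S (thresholds lie in [0,M] under the standing assumptions). *)
Definition outcome_prob (phi : R -> R) (M Rs Dc Ds S : R) (o : outcome) : R :=
  let c := M * phi (Rs + S) / Dc in
  let s := M * phi (Rs + S) / Ds in
  match o with
  | Fail => 1 - c / M
  | CoinOnly => (c - s) / M
  | StakeIss => s / M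
  end.

(** [run_prob ... S left w] = probability that, starting with stake [S] and
    [left] blocks still to be produced, the successive attempts have outcomes
    [w] and the last remaining block is produced exactly at the last attempt
    of [w]. *)
Fixpoint run_prob (phi : R -> R) (M Rs Dc Ds : R) (S : R) (left : nat)
    (w : list outcome) : R :=
  match w with
  | [] => if Nat.eqb left 0 then 1 else 0
  | o :: w' =>
      if Nat.eqb left 0 then 0 else
      outcome_prob phi M Rs Dc Ds S o *
      run_prob phi M Rs Dc Ds
        (match o with StakeIss => S + Rs | _ => S end)
        (match o with Fail => left | _ => Nat.pred left end) w'
  end.

Fixpoint all_words (t : nat) : list (list outcome) :=
  match t with
  | O => [ [] ]
  | S t' => flat_map (fun w => [Fail :: w; CoinOnly :: w; StakeIss :: w])
                     (all_words t')
  end.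

(** P(T = t), where T is the total number of hash attempts until the chain
    reaches length L (starting from stake S_0 = 0). *)
Definition prob_T_eq (phi : R -> R) (M Rs Dc Ds : R) (L t : nat) : R :=
  fold_right Rplus 0 (map (run_prob phi M Rs Dc Ds 0 L) (all_words t)).

Definition expected_time_is (phi : R -> R) (M Rs Dc Ds : R) (L : nat) (l : R)
  : Prop :=
  infinite_sum (fun t => INR t * prob_T_eq phi M Rs Dc Ds L t) l.

(* Main.v *)
Require Import Defs.
From Stdlib Require Import Reals List Lra Lia.
Import ListNotations.
Open Scope R_scope.

Lemma sum_flat (g : list outcome -> R) ws :
  fold_right Rplus 0 (map g (flat_map (fun w => [Fail::w; CoinOnly::w; StakeIss::w]) ws))
  = fold_right Rplus 0 (map (fun w => g (Fail::w) + g (CoinOnly::w) + g (StakeIss::w)) ws).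
Proof. induction ws as [|w ws IH]; simpl; [reflexivity| rewrite IH; ring]. Qed.

Lemma sum_lin (h1 h2 h3 : list outcome -> R) x y z ws :
  fold_right Rplus 0 (map (fun w => x * h1 w + y * h2 w + z * h3 w) ws)
  = x * fold_right Rplus 0 (map h1 ws) + y * fold_right Rplus 0 (map h2 ws)
    + z * fold_right Rplus 0 (map h3 ws).
Proof. induction ws as [|w ws IH]; simpl; [ring| rewrite IH; ring]. Qed.

Lemma sum_zero (h : list outcome -> R) ws :
  (forall w, h w = 0) -> fold_right Rplus 0 (map h ws) = 0.
Proof. intros H; induction ws as [|w ws IH]; simpl; [reflexivity| rewrite IH, H; ring]. Qed.

Definition fw M Rs Dc Ds a k m t :=
  fold_right Rplus 0 (map (run_prob (fun s => Rpower s a) M Rs Dc Ds (INR k * Rs) m) (all_words t)).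

Definition pr M Rs Dc Ds a k o := outcome_prob (fun s => Rpower s a) M Rs Dc Ds (INR k * Rs) o.

Lemma fw_step M Rs Dc Ds a k m t :
  fw M Rs Dc Ds a k (S m) (S t) =
  pr M Rs Dc Ds a k Fail * fw M Rs Dc Ds a k (S m) t
  + pr M Rs Dc Ds a k CoinOnly * fw M Rs Dc Ds a k m t
  + pr M Rs Dc Ds a k StakeIss * fw M Rs Dc Ds a (S k) m t.
Proof.
  unfold fw, pr. simpl all_words. rewrite sum_flat.
  rewrite <- sum_lin. f_equal. apply map_ext. intros w. simpl.
  replace (INR k * Rs + Rs) with (INR (S k) * Rs) by (rewrite S_INR; ring).
  reflexivity.
Qed.

Lemma fw_zero M Rs Dc Ds a k t : fw M Rs Dc Ds a k 0 (S t) = 0.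
Proof.
  unfold fw. simpl all_words. rewrite sum_flat. apply sum_zero. intros w. simpl. ring.
Qed.

Lemma sum_shift (u : nat -> R) N : sum_f_R0 u (S N) = u 0%nat + sum_f_R0 (fun t => u (S t)) N.
Proof.
  induction N as [|N IH]; simpl; [reflexivity|]. simpl in IH. rewrite IH. ring.
Qed.

Lemma sum_lin3 (f1 f2 f3 : nat -> R) x y z N :
  sum_f_R0 (fun t => x * f1 t + y * f2 t + z * f3 t) N
  = x * sum_f_R0 f1 N + y * sum_f_R0 f2 N + z * sum_f_R0 f3 N.
Proof. induction N as [|N IH]; simpl; [ring| rewrite IH; ring]. Qed.

Lemma sum_lin3e (f1 f2 f3 : nat -> R) x y z N :
  sum_f_R0 (fun t => (INR t + 1) * (x * f1 t + y * f2 t + z * f3 t)) N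
  = x * (sum_f_R0 (fun t => INR t * f1 t) N + sum_f_R0 f1 N)
  + y * (sum_f_R0 (fun t => INR t * f2 t) N + sum_f_R0 f2 N)
  + z * (sum_f_R0 (fun t => INR t * f3 t) N + sum_f_R0 f3 N).
Proof. induction N as [|N IH]; simpl; [ring| rewrite IH; ring]. Qed.

Lemma probs M Rs Dc Ds a L k
  (HM : 0 < M) (HDc : 0 < Dc) (HDcs : Dc <= Ds)
  (Hphi : forall k : nat, (k < L)%nat -> 0 < Rpower (Rs + INR k * Rs) a <= Dc) :
  (k < L)%nat ->
  0 <= pr M Rs Dc Ds a k Fail /\ 0 <= pr M Rs Dc Ds a k CoinOnly /\
  0 <= pr M Rs Dc Ds a k StakeIss /\
  pr M Rs Dc Ds a k Fail + pr M Rs Dc Ds a k CoinOnly + pr M Rs Dc Ds a k StakeIss = 1.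
Proof.
  intros Hk. destruct (Hphi k Hk) as [H1 H2].
  unfold pr, outcome_prob.
  set (p := Rpower (Rs + INR k * Rs) a) in *.
  assert (E1 : M * p / Dc / M = p / Dc) by (field; lra).
  assert (E2 : M * p / Ds / M = p / Ds) by (field; lra).
  assert (E3 : (M * p / Dc - M * p / Ds) / M = p / Dc - p / Ds) by (field; lra).
  rewrite E1, E2, E3.
  assert (A1 : p / Dc <= 1).
  { apply (Rmult_le_reg_r Dc); [lra|]. unfold Rdiv. rewrite Rmult_assoc, Rinv_l; lra. }
  assert (A2 : p / Ds <= p / Dc).
  { unfold Rdiv. apply Rmult_le_compat_l; [lra|]. apply Rinv_le_contravar; lra. }
  assert (A3 : 0 <= p / Ds).
  { unfold Rdiv. apply Rmult_le_pos; [lra|]. left; apply Rinv_0_lt_compat; lra. }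
  repeat split; lra.
Qed.

Lemma fw_0 M Rs Dc Ds a k m :
  fw M Rs Dc Ds a k m 0 = if Nat.eqb m 0 then 1 else 0.
Proof. unfold fw. simpl. destruct (Nat.eqb m 0); ring. Qed.

Lemma fw_nonneg M Rs Dc Ds a L
  (HM : 0 < M) (HDc : 0 < Dc) (HDcs : Dc <= Ds)
  (Hphi : forall k : nat, (k < L)%nat -> 0 < Rpower (Rs + INR k * Rs) a <= Dc) :
  forall t k m, (k + m <= L)%nat -> 0 <= fw M Rs Dc Ds a k m t.
Proof.
  induction t as [|t IH]; intros k m Hkm.
  - rewrite fw_0. destruct (Nat.eqb m 0); lra.
  - destruct m as [|m].
    + rewrite fw_zero. lra.
    + rewrite fw_step.
      destruct (probs M Rs Dc Ds a L k HM HDc HDcs Hphi) as (P1 & P2 & P3 & P4); [lia|].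
      assert (0 <= fw M Rs Dc Ds a k (S m) t) by (apply IH; lia).
      assert (0 <= fw M Rs Dc Ds a k m t) by (apply IH; lia).
      assert (0 <= fw M Rs Dc Ds a (S k) m t) by (apply IH; lia).
      assert (0 <= pr M Rs Dc Ds a k Fail * fw M Rs Dc Ds a k (S m) t) by (apply Rmult_le_pos; lra).
      assert (0 <= pr M Rs Dc Ds a k CoinOnly * fw M Rs Dc Ds a k m t) by (apply Rmult_le_pos; lra).
      assert (0 <= pr M Rs Dc Ds a k StakeIss * fw M Rs Dc Ds a (S k) m t) by (apply Rmult_le_pos; lra).
      lra.
Qed.

Lemma fw_sum_le1 M Rs Dc Ds a L
  (HM : 0 < M) (HDc : 0 < Dc) (HDcs : Dc <= Ds)
  (Hphi : forall k : nat, (k < L)%nat -> 0 < Rpower (Rs + INR k * Rs) a <= Dc) :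
  forall m k N, (k + m <= L)%nat -> sum_f_R0 (fw M Rs Dc Ds a k m) N <= 1.
Proof.
  induction m as [|m IHm]; intros k N Hkm.
  - assert (H : sum_f_R0 (fw M Rs Dc Ds a k 0) N = 1).
    { induction N as [|N IHN]; simpl.
      + rewrite fw_0. reflexivity.
      + simpl in IHN. rewrite IHN, fw_zero. ring. }
    lra.
  - induction N as [|N IHN].
    + simpl. rewrite fw_0. simpl. lra.
    + rewrite sum_shift. rewrite fw_0. simpl Nat.eqb.
      rewrite (sum_eq _ (fun t => pr M Rs Dc Ds a k Fail * fw M Rs Dc Ds a k (S m) t
        + pr M Rs Dc Ds a k CoinOnly * fw M Rs Dc Ds a k m t
        + pr M Rs Dc Ds a k StakeIss * fw M Rs Dc Ds a (S k) m t))
        by (intros; apply fw_step).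
      rewrite sum_lin3.
      destruct (probs M Rs Dc Ds a L k HM HDc HDcs Hphi) as (P1 & P2 & P3 & P4); [lia|].
      assert (Q2 := IHm k N ltac:(lia)).
      assert (Q3 := IHm (S k) N ltac:(lia)).
      assert (pr M Rs Dc Ds a k Fail * sum_f_R0 (fw M Rs Dc Ds a k (S m)) N <= pr M Rs Dc Ds a k Fail * 1) by (apply Rmult_le_compat_l; lra).
      assert (pr M Rs Dc Ds a k CoinOnly * sum_f_R0 (fw M Rs Dc Ds a k m) N <= pr M Rs Dc Ds a k CoinOnly * 1) by (apply Rmult_le_compat_l; lra).
      assert (pr M Rs Dc Ds a k StakeIss * sum_f_R0 (fw M Rs Dc Ds a (S k) m) N <= pr M Rs Dc Ds a k StakeIss * 1) by (apply Rmult_le_compat_l; lra).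
      lra.
Qed.

Fixpoint G a k m := match m with O => 0 | S m' => G a k m' + / Rpower (INR (k + m' + 1)) a end.

Lemma G_shift a k m : G a k (S m) = / Rpower (INR (k + 1)) a + G a (S k) m.
Proof.
  induction m as [|m IH].
  - simpl. rewrite Nat.add_0_r. ring.
  - change (G a k (S (S m))) with (G a k (S m) + / Rpower (INR (k + S m + 1)) a).
    rewrite IH. change (G a (S k) (S m)) with (G a (S k) m + / Rpower (INR (S k + m + 1)) a).
    replace (S k + m + 1)%nat with (k + S m + 1)%nat by lia. ring.
Qed.

Lemma G_nonneg a k m : 0 <= G a k m.
Proof.
  induction m as [|m IH]; simpl; [lra|].
  assert (0 < / Rpower (INR (k + m + 1)) a) by (apply Rinv_0_lt_compat; apply exp_pos). lra.
Qed.

Definition F Ds a Rs k m := Ds / Rpower Rs a * G a k m.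

Lemma key M Rs Dc Ds a k m
  (HM : 0 < M) (HR : 0 < Rs) (HDc : 0 < Dc) (HDcs : Dc <= Ds) :
  pr M Rs Dc Ds a k Fail * F Ds a Rs k (S m) + 1
  + pr M Rs Dc Ds a k CoinOnly * F Ds a Rs k m
  + pr M Rs Dc Ds a k StakeIss * F Ds a Rs (S k) m <= F Ds a Rs k (S m).
Proof.
  unfold pr, outcome_prob, F.
  assert (Hp : Rpower (Rs + INR k * Rs) a = Rpower Rs a * Rpower (INR (k+1)) a).
  { rewrite Rpower_mult_distr; [|lra| apply lt_0_INR; lia].
    f_equal. rewrite plus_INR. simpl. ring. }
  rewrite Hp.
  assert (HGs : G a (S k) m = G a k (S m) - / Rpower (INR (k + 1)) a) by (rewrite G_shift; ring).
  rewrite HGs.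
  change (G a k (S m)) with (G a k m + / Rpower (INR (k + m + 1)) a).
  set (r := Rpower Rs a). set (u := Rpower (INR (k+1)) a).
  set (v := / Rpower (INR (k + m + 1)) a). set (G0 := G a k m).
  assert (Hr : 0 < r) by apply exp_pos.
  assert (Hu : 0 < u) by apply exp_pos.
  assert (Hv : 0 < v) by (apply Rinv_0_lt_compat; apply exp_pos).
  assert (Hq : 1 <= Ds / Dc).
  { apply (Rmult_le_reg_r Dc); [lra|]. unfold Rdiv. rewrite Rmult_assoc, Rinv_l; lra. }
  match goal with |- ?L <= ?R => assert (E : L - R = u * v * (1 - Ds / Dc)) end.
  { field. lra. }
  assert (0 < u * v) by (apply Rmult_lt_0_compat; lra).
  assert (u * v * (1 - Ds / Dc) <= 0).
  { rewrite <- (Rmult_0_r (u*v)). apply Rmult_le_compat_l; lra. }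
  lra.
Qed.

Lemma Eg_bound M Rs Dc Ds a L
  (HM : 0 < M) (HR : 0 < Rs) (HDc : 0 < Dc) (HDcs : Dc <= Ds)
  (Hphi : forall k : nat, (k < L)%nat -> 0 < Rpower (Rs + INR k * Rs) a <= Dc) :
  forall m k N, (k + m <= L)%nat ->
    sum_f_R0 (fun t => INR t * fw M Rs Dc Ds a k m t) N <= F Ds a Rs k m.
Proof.
  assert (Fpos : forall k m, 0 <= F Ds a Rs k m).
  { intros. unfold F. apply Rmult_le_pos; [|apply G_nonneg].
    unfold Rdiv. apply Rmult_le_pos; [lra|]. left; apply Rinv_0_lt_compat, exp_pos. }
  induction m as [|m IHm]; intros k N Hkm.
  - assert (H : sum_f_R0 (fun t => INR t * fw M Rs Dc Ds a k 0 t) N = 0).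
    { induction N as [|N IHN]; simpl.
      + ring.
      + simpl in IHN. rewrite IHN, fw_zero. ring. }
    rewrite H. apply Fpos.
  - induction N as [|N IHN].
    + simpl. rewrite Rmult_0_l. apply Fpos.
    + rewrite sum_shift. simpl INR at 1. rewrite Rmult_0_l, Rplus_0_l.
      rewrite (sum_eq _ (fun t => (INR t + 1) * (pr M Rs Dc Ds a k Fail * fw M Rs Dc Ds a k (S m) t
        + pr M Rs Dc Ds a k CoinOnly * fw M Rs Dc Ds a k m t
        + pr M Rs Dc Ds a k StakeIss * fw M Rs Dc Ds a (S k) m t)))
        by (intros; rewrite fw_step, S_INR; reflexivity).
      rewrite sum_lin3e.
      destruct (probs M Rs Dc Ds a L k HM HDc HDcs Hphi) as (P1 & P2 & P3 & P4); [lia|].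
      assert (Q1 := fw_sum_le1 M Rs Dc Ds a L HM HDc HDcs Hphi (S m) k N ltac:(lia)).
      assert (Q2 := fw_sum_le1 M Rs Dc Ds a L HM HDc HDcs Hphi m k N ltac:(lia)).
      assert (Q3 := fw_sum_le1 M Rs Dc Ds a L HM HDc HDcs Hphi m (S k) N ltac:(lia)).
      assert (E2 := IHm k N ltac:(lia)).
      assert (E3 := IHm (S k) N ltac:(lia)).
      assert (K := key M Rs Dc Ds a k m HM HR HDc HDcs).
      set (pF := pr M Rs Dc Ds a k Fail) in *.
      set (pC := pr M Rs Dc Ds a k CoinOnly) in *.
      set (pS := pr M Rs Dc Ds a k StakeIss) in *.
      assert (pF * (sum_f_R0 (fun t => INR t * fw M Rs Dc Ds a k (S m) t) N + sum_f_R0 (fw M Rs Dc Ds a k (S m)) N) <= pF * (F Ds a Rs k (S m) + 1)) by (apply Rmult_le_compat_l; lra).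
      assert (pC * (sum_f_R0 (fun t => INR t * fw M Rs Dc Ds a k m t) N + sum_f_R0 (fw M Rs Dc Ds a k m) N) <= pC * (F Ds a Rs k m + 1)) by (apply Rmult_le_compat_l; lra).
      assert (pS * (sum_f_R0 (fun t => INR t * fw M Rs Dc Ds a (S k) m t) N + sum_f_R0 (fw M Rs Dc Ds a (S k) m) N) <= pS * (F Ds a Rs (S k) m + 1)) by (apply Rmult_le_compat_l; lra).
      lra.
Qed.

Lemma G_sum a n : G a 0 (S n) = sum_f_R0 (fun n => / Rpower (INR (S n)) a) n.
Proof.
  induction n as [|n IH].
  - simpl. ring.
  - change (G a 0 (S (S n))) with (G a 0 (S n) + / Rpower (INR (0 + S n + 1)) a).
    rewrite IH. simpl sum_f_R0. replace (0 + S n + 1)%nat with (S (S n)) by lia. reflexivity.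
Qed.

Theorem mainTheorem4 (M Rs Dc Ds a : R) (L : nat)
  (HM : 0 < M) (HR : 0 < Rs) (HDc : 0 < Dc) (HDcs : Dc <= Ds)
  (Ha0 : 0 < a) (Ha1 : a < 1) (HL : (1 <= L)%nat)
  (Hphi : forall k : nat, (k < L)%nat ->
            0 < Rpower (Rs + INR k * Rs) a <= Dc) :
  exists l : R,
    expected_time_is (fun s => Rpower s a) M Rs Dc Ds L l /\
    l <= Ds / Rpower Rs a *
         sum_f_R0 (fun n => / Rpower (INR (S n)) a) (L - 1).
Proof.
  assert (HT : forall t, prob_T_eq (fun s => Rpower s a) M Rs Dc Ds L t = fw M Rs Dc Ds a 0 L t).
  { intros t. unfold prob_T_eq, fw. simpl INR. rewrite Rmult_0_l. reflexivity. }
  set (u := fun N => sum_f_R0 (fun t => INR t * fw M Rs Dc Ds a 0 L t) N).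
  assert (Hb : forall N, u N <= F Ds a Rs 0 L)
    by (intros; apply (Eg_bound M Rs Dc Ds a L); auto; lia).
  assert (Hg : Un_growing u).
  { intros N. unfold u. cbn [sum_f_R0].
    assert (0 <= INR (S N) * fw M Rs Dc Ds a 0 L (S N)).
    { apply Rmult_le_pos; [apply pos_INR|]. apply (fw_nonneg M Rs Dc Ds a L); auto; lia. }
    lra. }
  destruct (growing_cv u Hg) as [l Hl].
  { exists (F Ds a Rs 0 L). intros x [n ->]. apply Hb. }
  exists l. split.
  - intros eps Heps. destruct (Hl eps Heps) as [N HN]. exists N. intros n Hn.
    rewrite (sum_eq _ (fun t => INR t * fw M Rs Dc Ds a 0 L t)) by (intros; rewrite HT; reflexivity).
    apply HN; auto.
  - replace (Ds / Rpower Rs a * sum_f_R0 (fun n => / Rpower (INR (S n)) a) (L - 1))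
      with (F Ds a Rs 0 L).
    2:{ unfold F. rewrite <- G_sum. replace (S (L - 1)) with L by lia. reflexivity. }
    destruct (Rle_or_lt l (F Ds a Rs 0 L)) as [H|H]; [exact H|].
    destruct (Hl (l - F Ds a Rs 0 L) ltac:(lra)) as [N HN].
    specialize (HN N (le_n N)). specialize (Hb N).
    unfold Rdist in HN. apply Rabs_def2 in HN. destruct HN. lra.
Qed.
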